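(* Fix $\delta\in(0,1)$. Suppose that for each $t\ge2$ and $g\in[t-1]$, $T^{(t)}_g\in\{0,1\}$ is a measurable function of $(Y_1,\dots,Y_t)$, and that: (A) for all $t\ge 2$ and $g\in[t-1]$, $\mathbb P_\infty(T^{(t)}_g=1)\le \delta/(3t^2\log t)$; (B) there are a number $\rho=\rho(P_1,P_2)\ge0$ and a function $r(t,\delta)>0$ non-decreasing in $t$ such that whenever $\tau<\infty$, $\tau<t\le 2\tau$ and $(t-\tau)\rho\ge r(t,\delta)$, we have $\mathbb P_\tau(T^{(t)}_g=1)\ge1-\delta$ for every integer $g$ with $(t-\tau)/2\le g\le t-\tau$. Let $\hat\tau=\inf\{t\in\mathbb N:t\ge2,\ \max_{g\in G^{(t)}}T^{(t)}_g=1\}$. Then $\mathbb P_\infty(\hat\tau<\infty)\le\delta$, and for every $\tau\in\mathbb N$ with $\tau\rho\ge r(2\tau,\delta)$, $$\mathbb P_\tau\Big\{\hat\tau\le\tau+\Big\lceil\frac{r(2\tau,\delta)}{\rho}\Big\rceil\Big\}\ge1-\delta.$$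
   Context: $\log$ is the natural logarithm, $[n]=\{1,\dots,n\}$, $\inf\emptyset=\infty$. Model: $(Y_i)_{i\in\mathbb N}$ are independent random vectors in $\mathbb R^p$; for $\tau\in\mathbb N\cup\{\infty\}$, under $\mathbb P_\tau$, $Y_i\sim P_1$ for $i\le\tau$ and $Y_i\sim P_2$ for $i>\tau$ (all $Y_i\sim P_1$ if $\tau=\infty$). Dynamic geometric grid: for $t\ge2$, $G^{(t)}=\{1\}\cup\bigcup_{j=1}^{\lfloor \log_2\{(t-1)/3\}\rfloor+1}\{g^{(t)}_{L,j}\}\cup\bigcup_{j=1}^{\lfloor\log_2(t-1)\rfloor-1}\{g^{(t)}_{R,j}\}$ with $g^{(t)}_{L,j}=2^j+\{(t-1)\bmod 2^{j-1}\}$, $g^{(t)}_{R,j}=g^{(t)}_{L,j}+2^{j-1}$ (empty unions if the upper index is $<1$; $a\bmod b=a-b\lfloor a/b\rfloor$). *)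

(* Defs.v *)
From HB Require Import structures.
From mathcomp Require Import all_boot all_order all_algebra.
From mathcomp Require Import all_classical all_reals all_analysis.
Set Implicit Arguments. Unset Strict Implicit. Unset Printing Implicit Defensive.
Import Order.TTheory GRing.Theory Num.Theory.
Local Open Scope classical_set_scope.
Local Open Scope ring_scope.

(* number of left grid points: floor(log2((t-1)/3)) + 1 when (t-1)/3 >= 1,
   and 0 (empty union) otherwise.  For n >= 3, floor(log2(n/3)) is the
   largest k with 2^k <= n/3, i.e. with 2^k <= n %/ 3, i.e. trunc_log 2 (n %/ 3). *)
Definition nL (t : nat) : nat :=
  if (3 <= t.-1)%N then (trunc_log 2 (t.-1 %/ 3)).+1 else 0%N.

Definition nR (t : nat) : nat := (trunc_log 2 t.-1).-1.

Definition gL (t j : nat) : nat := (2 ^ j + (t.-1 %% 2 ^ j.-1))%N.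
Definition gR (t j : nat) : nat := (gL t j + 2 ^ j.-1)%N.

Definition grid (t : nat) : seq nat :=
  1%N :: [seq gL t j | j <- iota 1 (nL t)] ++ [seq gR t j | j <- iota 1 (nR t)].

Section model.
Context {R : realType} {d dX : measure_display}
  {Omega : measurableType d} {X : measurableType dX}.

Definition mutually_independent (P : probability Omega R) (I : set nat)
    (Y : nat -> Omega -> X) : Prop :=
  forall (S : seq nat) (B : nat -> set X),
    uniq S -> [set` S] `<=` I -> (forall i, i \in S -> measurable (B i)) ->
    P (\bigcap_(i in [set` S]) (Y i @^-1` B i)) =
      (\prod_(i <- S) P (Y i @^-1` B i))%E.

(* Under P_tau: the Y_i (i >= 1) are independent, measurable, Y_i ~ P1 for
   i <= tau and Y_i ~ P2 for i > tau; tau = None encodes tau = infinity. *)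
Definition changepoint_model (P1 P2 : probability X R) (Y : nat -> Omega -> X)
    (P : probability Omega R) (tau : option nat) : Prop :=
  [/\ forall i, (0 < i)%N -> measurable_fun setT (Y i),
      mutually_independent P [set i | (0 < i)%N] Y &
      forall i, (0 < i)%N -> forall B, measurable B ->
        P (Y i @^-1` B) =
          (if tau is Some tau' then (if (i <= tau')%N then P1 B else P2 B)
           else P1 B)].

Definition obs (Y : nat -> Omega -> X) (t : nat) (w : Omega) : t.-tuple X :=
  [tuple Y i.+1 w | i < t].

Definition Tstat (f : forall t : nat, nat -> t.-tuple X -> bool)
    (Y : nat -> Omega -> X) (t g : nat) (w : Omega) : bool :=
  f t g (obs Y t w).

End model.

Definition tauhat {R : realType} {Omega : Type}
    (T : nat -> nat -> Omega -> bool) (w : Omega) : \bar R :=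
  ereal_inf [set (t%:R)%:E | t in
     [set t : nat | (2 <= t)%N /\ (\max_(g <- grid t) (T t g w : nat))%N = 1%N]].

(* Main.v *)
Require Import Defs.
From HB Require Import structures.
From mathcomp Require Import all_boot all_order all_algebra.
From mathcomp Require Import all_classical all_reals all_analysis.
Import Order.TTheory GRing.Theory Num.Theory.
Local Open Scope classical_set_scope.
Local Open Scope ring_scope.
From mathcomp Require Import zify ring lra.

Lemma grid_range t g : (2 <= t)%N -> g \in grid t -> (1 <= g <= t.-1)%N.
Proof.
move=> t2; rewrite /grid inE mem_cat => /orP[/eqP->|/orP[]]; first lia.
- case/mapP => j; rewrite mem_iota /nL => hj ->.
  case: ifP hj => h3 hj; last lia.
  have hk : (j.-1 <= trunc_log 2 (t.-1 %/ 3))%N by lia.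
  have := trunc_logP (p:=2) (n:=t.-1 %/ 3) isT ltac:(lia).
  move=> /(leq_trans (leq_pexp2l (m:=2) isT hk)) hp.
  have hm := ltn_pmod t.-1 (expn_gt0 2 j.-1).
  rewrite /gL.
  have e : (2 ^ j = 2 * 2 ^ j.-1)%N by case: (j) hj => [|k] //= _; rewrite expnS.
  rewrite e; move: hp hm; set P := (2 ^ j.-1)%N; set q := (t.-1 %/3)%N.
  have := expn_gt0 2 j.-1; rewrite -/P; lia.
- case/mapP => j; rewrite mem_iota /nR => hj ->.
  set a := trunc_log 2 t.-1 in hj.
  have ha : (2 ^ a <= t.-1)%N by apply: trunc_logP => //; lia.
  have hk : (j.+1 <= a)%N by lia.
  have hp := leq_trans (leq_pexp2l (m:=2) isT hk) ha.
  have hm := ltn_pmod t.-1 (expn_gt0 2 j.-1).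
  rewrite /gR /gL.
  have e : (2 ^ j = 2 * 2 ^ j.-1)%N.
    by case: (j) hj => [|k] //= _; rewrite expnS.
  rewrite expnS e in hp; rewrite e; move: hm hp; set P := (2 ^ j.-1)%N.
  have := expn_gt0 2 j.-1; rewrite -/P; lia.
Qed.

Lemma grid_exists t m : (1 <= m)%N -> (2 * m <= t)%N ->
  exists g, [/\ g \in grid t, (m <= 2 * g)%N & (g <= m)%N].
Proof.
move=> m1 mt.
case: (leqP m 1) => hm.
  by exists 1%N; split; [rewrite inE eqxx | lia | lia].
set j := trunc_log 2 m.
have hj1 : (1 <= j)%N by apply: trunc_log_max => //; lia.
have hjm : (2 ^ j <= m)%N by apply: trunc_logP => //; lia.
have hjm' : (m < 2 ^ j.+1)%N by apply: trunc_log_ltn.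
have ej : (2 ^ j = 2 * 2 ^ j.-1)%N by case: (j) hj1 => //= k _; rewrite expnS.
have hmod := ltn_pmod t.-1 (expn_gt0 2 j.-1).
case: (leqP (gL t j) m) => hg.
  exists (gL t j); split => //.
  - rewrite /grid inE mem_cat; apply/orP; right; apply/orP; left.
    apply: map_f; rewrite mem_iota /nL.
    have h3 : (3 <= t.-1)%N.
      have := expn_gt0 2 j.-1; rewrite expnS in hjm'; lia.
    rewrite h3; apply/andP; split => //.
    suff : (j.-1 <= trunc_log 2 (t.-1 %/ 3))%N by lia.
    apply: trunc_log_max => //.
    rewrite expnS in hjm'; move: hjm' hjm; rewrite ej.
    have := expn_gt0 2 j.-1; set P := (2 ^ j.-1)%N; lia.
  - rewrite /gL; rewrite expnS in hjm'; lia.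
have hj2 : (2 <= j)%N.
  case: (ltngtP j 1) hj1 => // hj1' _.
  by move: hg; rewrite /gL hj1' /= modn1 expn1; lia.
exists (gR t j.-1); split.
- rewrite /grid inE mem_cat; apply/orP; right; apply/orP; right.
  apply: map_f; rewrite mem_iota /nR.
  suff : (j <= trunc_log 2 t.-1)%N by lia.
  apply: trunc_log_max => //; lia.
- have ej2 : (2 ^ j.-1 = 2 * 2 ^ j.-2)%N by case: (j) hj2 => // [[]] //= k _; rewrite expnS.
  have hmod2 := ltn_pmod t.-1 (expn_gt0 2 j.-2).
  move: hg; rewrite /gR /gL ej.
  rewrite ej2 in hmod *; lia.
- have ej2 : (2 ^ j.-1 = 2 * 2 ^ j.-2)%N by case: (j) hj2 => // [[]] //= k _; rewrite expnS.
  have hmod2 := ltn_pmod t.-1 (expn_gt0 2 j.-2).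
  rewrite /gR /gL.
  rewrite ej in hjm; rewrite ej2 in hjm *; lia.
Qed.

Lemma grid_size t : (2 <= t)%N -> (2 ^ size (grid t) <= t ^ 2)%N.
Proof.
move=> t2.
rewrite /grid /= size_cat !size_map !size_iota.
have hL : (2 ^ nL t <= t)%N.
  rewrite /nL; case: ifP => h3; last by rewrite expn0; lia.
  rewrite expnS; have := trunc_logP (p:=2) (n:=t.-1 %/ 3) isT ltac:(lia); lia.
have hR : (2 ^ (nR t).+1 <= t)%N.
  rewrite /nR; set a := trunc_log 2 t.-1.
  have ha : (2 ^ a <= t.-1)%N by apply: trunc_logP => //; lia.
  case: (a) ha => [|a'] ha /=; first by rewrite expn1.
  lia.
idtac.
by rewrite -addnS expnD -mulnn; exact: leq_mul.
Qed.

Section R.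
Variable R : realType.

Lemma ln2_ge : 1 / 2 <= ln (2 : R).
Proof.
have h := expR_ge1Dx (- ln (2:R)).
rewrite expRN lnK in h; last by rewrite posrE.
have : (2:R)^-1 = 1/2 by rewrite div1r.
lra.
Qed.

Definition bt (t : nat) : R := if (2 <= t)%N then 4 / (3 * t%:R ^+ 2) else 0.

Lemma bt_ge0 t : 0 <= bt t.
Proof. rewrite /bt; case: ifP => // _; apply: divr_ge0 => //; apply: mulr_ge0 => //; exact: sqr_ge0. Qed.

Lemma sum_bt_aux N : \sum_(t < N.+2) bt t <= 8/9 - 8 / (3 * (2 * N%:R + 3)).
Proof.
elim: N => [|N IH].
  rewrite !big_ord_recr big_ord0 /bt /=; by rewrite mulr0 add0r addr0 add0r -natrM subrr.
rewrite big_ord_recr /=.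
have -> : bt N.+2 = 4 / (3 * (N%:R + 2) ^+ 2).
  by rewrite /bt /= -[N.+2]addn2 natrD.
set x : R := N%:R in IH *.
have x0 : 0 <= x by rewrite /x.
have -> : (N.+1%:R : R) = x + 1 by rewrite -addn1 natrD.
suff : 4 / (3 * (x + 2) ^+ 2) <= 8 / (3 * (2 * x + 3)) - 8 / (3 * (2 * (x + 1) + 3)).
  lra.
rewrite -subr_ge0.
have -> : 8 / (3 * (2 * x + 3)) - 8 / (3 * (2 * (x + 1) + 3)) - 4 / (3 * (x + 2) ^+ 2)
   = 4 / (3 * (2 * x + 3) * (2 * x + 5) * (x + 2) ^+ 2) :> R.
  field; rewrite -/x; apply/and3P; split; apply: lt0r_neq0; lra.
apply: divr_ge0 => //; apply: mulr_ge0; [nra|exact: sqr_ge0].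
Qed.

Lemma sum_bt N : \sum_(t < N) bt t <= 8/9.
Proof.
case: N => [|[|N]].
- rewrite big_ord0; lra.
- rewrite big_ord_recr big_ord0 /bt /=; lra.
- apply: le_trans (sum_bt_aux N) _.
  have : 0 <= 8 / (3 * (2 * N%:R + 3)) :> R.
    apply: divr_ge0 => //; apply: mulr_ge0 => //; have : 0 <= (N%:R:R) by []; lra.
  lra.
Qed.

Lemma term_bound (delta : R) t : 0 < delta -> (2 <= t)%N ->
  (size (grid t))%:R * (delta / (3 * t%:R ^+ 2 * ln t%:R)) <= delta * bt t.
Proof.
move=> d0 t2.
have tR : (2:R) <= t%:R by rewrite (ler_nat R 2 t).
have lt0 : 0 < ln (t%:R : R) by apply: ln_gt0; lra.
have hs : (size (grid t))%:R <= 4 * ln (t%:R : R).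
  have h := @grid_size t t2.
  have : ln ((2:R) ^+ size (grid t)) <= ln ((t%:R : R) ^+ 2).
    rewrite ler_ln ?posrE; [ | by apply: exprn_gt0 | apply: exprn_gt0; lra].
    by rewrite -natrX -natrX ler_nat.
  rewrite !lnXn //; last lra.
  rewrite -[ln 2 *+ _]mulr_natr -[ln _ *+ 2]mulr_natr => h2.
  have := ln2_ge. set s : R := (size (grid t))%:R in h2 *.
  have s0 : 0 <= s by rewrite /s.
  move=> l2.
  have : 0 <= (ln 2 - 1/2) * s by apply: mulr_ge0 => //; lra.
  lra.
rewrite /bt t2.
set s : R := (size (grid t))%:R in hs *.
set L := ln (t%:R : R) in lt0 hs *.
set T2 := (t%:R : R) ^+ 2.
have T20 : 0 < T2 by rewrite /T2 exprn_gt0 //; lra.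
rewrite mulrCA.
apply: ler_wpM2l; first lra.
rewrite ler_pdivrMr; last by rewrite mulr_gt0 // mulr_gt0.
have -> : 4 / (3 * T2) * (3 * T2 * L) = 4 * L.
  by field; rewrite lt0r_neq0.
exact: hs.
Qed.
End R.

Lemma max_bool_has (s : seq nat) (b : nat -> bool) :
  ((\max_(g <- s) (b g : nat))%N = 1%N) <-> has b s.
Proof.
elim: s => [|x s IH]; first by rewrite big_nil.
rewrite big_cons /=; split.
- case: (b x) => //= h; apply/IH.
  have hle : (\max_(g <- s) (b g : nat) <= 1)%N.
    by apply: (big_ind (fun n => n <= 1)%N) => //; [move=> ? ? ? ?; lia | move=> i _; case: (b i)].
  move: h; rewrite /maxn; case: ifP => //; lia.
- case/orP => [->|/IH ->]; last by case: (b x).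
  have hle : (\max_(g <- s) (b g : nat) <= 1)%N.
    by apply: (big_ind (fun n => n <= 1)%N) => //; [move=> ? ? ? ?; lia | move=> i _; case: (b i)].
  rewrite /=; lia.
Qed.

Lemma union_bound d (Omega : measurableType d) (R : realType)
  (mu : {measure set Omega -> \bar R}) (A : nat -> Omega -> bool) (s : seq nat) (c : R) :
  (forall g, g \in s -> measurable [set w | A g w]) ->
  (forall g, g \in s -> (mu [set w | A g w] <= c%:E)%E) ->
  measurable [set w | has (fun g => A g w) s] /\
  (mu [set w | has (fun g => A g w) s] <= (c *+ size s)%:E)%E.
Proof.
elim: s => [|x s IH] hm hc.
  have -> : [set w | has (fun g => A g w) [::]] = set0 by apply/seteqP; split => w.
  by rewrite measure0 /= mulr0n; split.
have e : [set w | has (fun g => A g w) (x :: s)] =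
   [set w | A x w] `|` [set w | has (fun g => A g w) s].
  by apply/seteqP; split => w /=; [case/orP => h; [left|right] | case => ->//; rewrite orbT].
have [ms hs] : d.-measurable [set w | has (A^~ w) s] /\
  (mu [set w | has (A^~ w) s] <= (c *+ size s)%:E)%E.
  by apply: IH => g gs; [apply: hm | apply: hc]; rewrite inE gs orbT.
have mx := hm x (mem_head _ _).
rewrite e; split; first exact: measurableU.
apply: le_trans (measureU2 _ mx ms) _.
rewrite /= mulrS EFinD; apply: leeD => //; exact: hc (mem_head _ _).
Qed.

Lemma natfacts tau mn : (1 <= mn)%N -> (mn <= tau)%N ->
  [/\ (2 * mn <= tau + mn)%N, (tau < tau + mn <= 2 * tau)%N, (2 <= tau + mn)%N
     & (tau + mn <= 2 * tau)%N].
Proof. move=> *; split; lia. Qed.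

Theorem proposition3 (R : realType) (p : nat) (d : measure_display)
  (Omega : measurableType d)
  (P1 P2 : probability (p.-tuple R) R) (Y : nat -> Omega -> p.-tuple R)
  (Pinf : probability Omega R) (P : nat -> probability Omega R)
  (f : forall t : nat, nat -> t.-tuple (p.-tuple R) -> bool)
  (delta rho : R) (r : nat -> R -> R) :
  0 < delta < 1 ->
  changepoint_model P1 P2 Y Pinf None ->
  (forall tau, (0 < tau)%N -> changepoint_model P1 P2 Y (P tau) (Some tau)) ->
  (forall t g, (2 <= t)%N -> (1 <= g <= t.-1)%N -> measurable_fun setT (f t g)) ->
  (* (A) *)
  (forall t g, (2 <= t)%N -> (1 <= g <= t.-1)%N ->
     (Pinf [set w | Tstat f Y t g w] <= (delta / (3 * t%:R ^+ 2 * ln t%:R))%:E)%E) ->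
  (* (B) *)
  0 <= rho ->
  (forall t, 0 < r t delta) ->
  (forall t1 t2, (t1 <= t2)%N -> r t1 delta <= r t2 delta) ->
  (forall tau t, (0 < tau)%N -> (tau < t <= 2 * tau)%N ->
     r t delta <= (t - tau)%N%:R * rho ->
     forall g : nat, (t - tau)%N%:R / 2 <= (g%:R : R) -> (g <= t - tau)%N ->
       ((1 - delta)%:E <= P tau [set w | Tstat f Y t g w])%E) ->
  (Pinf [set w | tauhat (R:=R) (Tstat f Y) w < +oo] <= delta%:E)%E /\
  (forall tau : nat, (0 < tau)%N -> r (2 * tau)%N delta <= tau%:R * rho ->
     ((1 - delta)%:E <=
      P tau [set w | tauhat (R:=R) (Tstat f Y) w <=
                     (tau%:R + (Num.ceil (r (2 * tau)%N delta / rho))%:~R)%:E])%E).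
Proof.
move=> /andP[d0 d1] Hinf HP Hf HA rho0 rpos rmono HB.
set T := Tstat f Y.
have mY : forall i, (0 < i)%N -> measurable_fun setT (Y i).
  by case: Hinf.
have mobs : forall t, measurable_fun setT (obs Y t).
  move=> t; apply/measurable_fun_tnthP => i.
  have -> : (tnth (T:=p.-tuple R))^~ i \o obs Y t = Y i.+1.
    by apply: funext => w /=; rewrite /obs tnth_mktuple.
  exact: mY.
have mT : forall t g, (2 <= t)%N -> (1 <= g <= t.-1)%N -> measurable [set w | T t g w].
  move=> t g t2 hg.
  have -> : [set w | T t g w] = (f t g \o obs Y t) @^-1` [set true].
    by apply/seteqP; split => w /=; rewrite /T /Tstat => ->.
  rewrite -[_ @^-1` _]setTI.
  by apply: (measurableT_comp (Hf t g t2 hg) (mobs t)) => //.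
set Ev := fun t => [set w | (2 <= t)%N /\ has (fun g => T t g w) (grid t)].
have Ev_sub : forall (mu : {measure set Omega -> \bar R}) t (c : R),
    (2 <= t)%N -> (forall g, g \in grid t -> (mu [set w | T t g w] <= c%:E)%E) ->
    measurable (Ev t) /\ (mu (Ev t) <= (c *+ size (grid t))%:E)%E.
  move=> mu t c t2 hc.
  have -> : Ev t = [set w | has (fun g => T t g w) (grid t)].
    by apply/seteqP; split => w /=; [case | split].
  apply: union_bound => // g gs; apply: mT => //; exact: grid_range.
have mEv : forall t, measurable (Ev t).
  move=> t; case: (leqP 2 t) => t2.
    by case: (Ev_sub Pinf t 1 t2) => // g gs; rewrite probability_le1 //; apply: mT => //; exact: grid_range.
  have -> : Ev t = set0 by apply/seteqP; split => w //= []; lia.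
  exact: measurable0.
have tauhat_ub : forall w t, Ev t w -> (tauhat (R:=R) T w <= (t%:R)%:E)%E.
  move=> w t; rewrite /Ev /= => -[t2 ht]; apply: ereal_inf_lbound; exists t => //.
  by split => //; apply/max_bool_has.
have tauhat_fin : forall w, (tauhat (R:=R) T w < +oo)%E -> exists t, Ev t w.
  move=> w; apply: contraPP => /forallNP hn.
  rewrite /tauhat.
  have -> : [set (t%:R)%:E | t in [set t : nat | (2 <= t)%N /\
       (\max_(g <- grid t) (T t g w : nat))%N = 1%N]] = set0 :> set (\bar R).
    apply/seteqP; split => // x [t [t2 /max_bool_has ht] _].
    by apply: (hn t).
  by rewrite ereal_inf0 ltxx.
have tauhat_inv : forall w N, (tauhat (R:=R) T w <= (N%:R)%:E)%E -> exists t, (t <= N)%N /\ Ev t w.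
  move=> w N; apply: contraPP => /forallNP hn.
  apply/negP; rewrite -ltNge.
  apply: (@lt_le_trans _ _ ((N.+1)%:R)%:E); first by rewrite lte_fin ltr_nat.
  apply: le_ereal_inf_tmp => x [t [t2 /max_bool_has ht] <-].
  rewrite lee_fin ler_nat; case: (leqP t N) => // tN.
  by exfalso; apply: (hn t); split.
split.
  have eA : [set w | (tauhat (R:=R) T w < +oo)%E] = \bigcup_t Ev t.
    apply/seteqP; split => w /=.
      by move/tauhat_fin => [t h]; exists t.
    by case=> t _ h; apply: le_lt_trans (tauhat_ub w t h) _; exact: ltry.
  rewrite eA.
  apply: le_trans (measure_sigma_subadditive Pinf mEv (bigcupT_measurable Ev mEv) (@subset_refl _ _)) _.
  apply: lime_le; first by apply: is_cvg_nneseries => n _ _; exact: measure_ge0.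
  apply: nearW => N.
  apply: (@le_trans _ _ (\sum_(0 <= n < N) (delta * bt R n)%:E)%E).
    apply: lee_sum => n _.
    case: (leqP 2 n) => n2.
      have [_ h] := Ev_sub Pinf n (delta / (3 * n%:R ^+ 2 * ln n%:R)) n2
         (fun g gs => HA n g n2 (@grid_range n g n2 gs)).
      apply: le_trans h _; rewrite lee_fin -[_ *+ size _]mulr_natl; exact: (term_bound R).
    have -> : Ev n = set0 by apply/seteqP; split => w //= []; lia.
    by rewrite measure0 /bt leqNgt n2 mulr0.
  rewrite sumEFin lee_fin -mulr_sumr big_mkord.
  apply: le_trans (ler_wpM2l (ltW d0) (sum_bt R N)) _; lra.
move=> tau tau0 hr.
have rpos2 := rpos (2 * tau)%N.
have rho0' : 0 < rho.
  rewrite lt_neqAle rho0 andbT; apply/eqP => e; move: hr; rewrite -e mulr0; lra.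
set c := r (2 * tau)%N delta / rho.
have c0 : 0 < c by apply: divr_gt0.
have cle : c <= tau%:R by rewrite /c ler_pdivrMr.
have crho : c * rho = r (2 * tau)%N delta by rewrite /c divfK // lt0r_neq0.
have mge : c <= (Num.ceil c)%:~R := ceil_ge c.
have m0 : 0 <= Num.ceil c.
  rewrite -(ler0z R); apply: le_trans mge; lra.
have mlet : Num.ceil c <= tau%:Z by rewrite ceil_le_int.
move: mge m0 mlet; set m := Num.ceil c => mge m0 mlet.
have em := gez0_abs m0.
set mn := `|m|%N in em.
rewrite -em in mge mlet *.
have mnc : c <= mn%:R by exact: mge.
have mn1 : (1 <= mn)%N.
  rewrite lt0n; apply/eqP => e; move: mnc; rewrite e; lra.
have mnt : (mn <= tau)%N by rewrite -lez_nat.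
have [nf1 nf2 nf3 nf4] := @natfacts tau mn mn1 mnt.
set t := (tau + mn)%N in nf1 nf2 nf3 nf4 *.
have et : (tau%:R + (Posz mn)%:~R)%:E = (t%:R : R)%:E by rewrite /t natrD.
rewrite et.
have [g [gg hg1 hg2]] := @grid_exists t mn mn1 nf1.
have etm : (t - tau)%N = mn by rewrite /t addKn.
have Hg := HB tau t tau0 nf2.
rewrite etm in Hg.
have t2 : (2 <= t)%N := nf3.
have Hg' := Hg ltac:(apply: le_trans (rmono t (2 * tau)%N nf4) _;
   rewrite -crho; apply: ler_wpM2r => //; lra) g ltac:(rewrite ler_pdivrMr // -natrM ler_nat mulnC; exact: hg1) hg2.
apply: le_trans Hg' _.
apply: le_measure.
- rewrite inE; apply: mT => //; exact: (@grid_range t g t2 gg).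
- rewrite inE.
  have -> : [set w | (tauhat (R:=R) T w <= (t%:R)%:E)%E] =
      \bigcup_(n in [set n | (n <= t)%N]) Ev n.
    apply/seteqP; split => w /=.
      by move/tauhat_inv => [n [hn h]]; exists n.
    case=> n hn h; apply: le_trans (tauhat_ub w n h) _.
    by rewrite lee_fin ler_nat.
  by apply: bigcup_measurable => n _; exact: mEv.
- move=> w /= hT; apply: (tauhat_ub w t); split => //.
  by apply/hasP; exists g.
Qed.
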